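(* Let $G$ be a tree on $n$ vertices. Then $G\in\mathcal{G}^{\rm SSP}$ if and only if $G$ contains no vertex of degree at least four and does not contain two vertices of degree three.
   Context: All graphs are finite, simple, undirected. For a graph $G$ on $\{1,\ldots,n\}$, $\mathcal{S}(G)$ is the set of real symmetric $n\times n$ matrices $A=(a_{ij})$ with $a_{ij}\neq0$ iff $\{i,j\}\in E(G)$ for $i\neq j$ (diagonal arbitrary). A real symmetric $A$ has the strong spectral property (SSP) if the only real symmetric $X$ with $A\circ X=0$, $I\circ X=0$, $AX-XA=0$ is $X=0$ ($\circ$ = entrywise product). $\mathcal{G}^{\rm SSP}$ is the set of graphs $G$ such that every matrix in $\mathcal{S}(G)$ has the SSP. *)

(* Defs.v *)
From HB Require Import structures.
From mathcomp Require Import all_boot all_order all_algebra.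
From mathcomp Require Import reals.
Set Implicit Arguments. Unset Strict Implicit. Unset Printing Implicit Defensive.
Import Order.TTheory GRing.Theory Num.Theory.
Local Open Scope ring_scope.

Definition simple_graph (n : nat) (e : rel 'I_n) : Prop :=
  symmetric e /\ irreflexive e.

Definition graph_connected (n : nat) (e : rel 'I_n) : Prop :=
  forall x y : 'I_n, connect e x y.

Definition graph_acyclic (n : nat) (e : rel 'I_n) : Prop :=
  forall c : seq 'I_n, ucycle e c -> (size c < 3)%N.

Definition is_tree (n : nat) (e : rel 'I_n) : Prop :=
  simple_graph e /\ graph_connected e /\ graph_acyclic e.

Definition degree (n : nat) (e : rel 'I_n) (v : 'I_n) : nat :=
  #|[set w | e v w]|.

Definition in_SG (R : realType) (n : nat) (e : rel 'I_n) (A : 'M[R]_n) : Prop :=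
  A^T = A /\ (forall i j : 'I_n, i != j -> (A i j != 0) = e i j).

Definition hadamard (R : realType) (n : nat) (A B : 'M[R]_n) : 'M[R]_n :=
  \matrix_(i, j) (A i j * B i j).

Definition SSP (R : realType) (n : nat) (A : 'M[R]_n) : Prop :=
  forall X : 'M[R]_n, X^T = X ->
    hadamard A X = 0 -> hadamard 1%:M X = 0 -> A *m X - X *m A = 0 ->
    X = 0.

Definition in_GSSP (R : realType) (n : nat) (e : rel 'I_n) : Prop :=
  forall A : 'M[R]_n, in_SG e A -> SSP A.

(* Main.v *)
Require Import Defs.
From mathcomp Require Import all_boot all_order all_algebra.
From mathcomp Require Import reals.
From mathcomp Require Import zify ring.
Set Implicit Arguments. Unset Strict Implicit. Unset Printing Implicit Defensive.
Import Order.TTheory GRing.Theory Num.Theory.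

Section Graph.
Variable n : nat.
Variable e : rel 'I_n.
Hypothesis esym : symmetric e.
Hypothesis eirr : irreflexive e.
Hypothesis eacy : graph_acyclic e.

Definition eP (P : {set 'I_n}) : rel 'I_n :=
  [rel a b | [&& e a b, a \notin P & b \notin P]].

Lemma eP_sym (P : {set 'I_n}) : symmetric (eP P).
Proof. by move=> a b; rewrite /eP /= esym; congr (_ && _); exact: andbC. Qed.

Lemma path_eP_notin (P : {set 'I_n}) x s : path (eP P) x s -> all (fun y => y \notin P) s.
Proof.
elim: s x => //= y s IH x /andP[/and3P[_ _ ->] /IH] ->. by [].
Qed.

Lemma path_eP_e (P : {set 'I_n}) x s : path (eP P) x s -> path e x s.
Proof. apply: sub_path => a b /and3P[] //. Qed.

Lemma connect_eP_notin (P : {set 'I_n}) u w : u \notin P -> connect (eP P) u w -> w \notin P.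
Proof.
move=> uP /connectP[s ps ->]. elim: s u uP ps => //= y s IH u uP /andP[/and3P[_ _ yP] ps].
exact: IH ps.
Qed.

Lemma L_gen (P : {set 'I_n}) p u u' : p \in P -> e p u -> e p u' -> u != u' -> u \notin P ->
  connect (eP P) u u' -> False.
Proof.
move=> pP epu epu' uu' uP /connectP[s ps Hl].
move: epu' uu'; rewrite Hl => epu' uu'.
case: (shortenP ps) epu' uu' => s' ps' us' sub' epu' uu'.
have := eacy (c := p :: u :: s').
have Hall := path_eP_notin ps'.
have Hpe := path_eP_e ps'.
have puniq : p \notin u :: s'.
  rewrite inE negb_or; apply/andP; split.
    by apply: contraNneq uP => <-.
  by apply/negP => /(allP Hall) /=; rewrite pP.
have Hne : s' != [::] by apply: contraNneq uu' => ->.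
have -> : (size (p :: u :: s') < 3)%N = false.
  by case: s' Hne {ps' us' sub' Hall Hpe puniq uu' epu'} => //.
move=> H; suff : false by []. apply: H.
rewrite /ucycle /= rcons_path epu Hpe (esym _ p) epu' /=.
rewrite puniq. exact: us'. 
Qed.

Definition gcomp (P : {set 'I_n}) (u : 'I_n) : {set 'I_n} := [set w | connect (eP P) u w].

Lemma comp_closed (P : {set 'I_n}) u w k : u \notin P -> w \in gcomp P u -> e w k -> k \notin P -> k \in gcomp P u.
Proof.
move=> uP; rewrite !inE => cw ewk kP.
have wP := connect_eP_notin uP cw.
apply: (connect_trans cw); apply: connect1.
by rewrite /eP /= ewk kP wP.
Qed.

Lemma comp_notin (P : {set 'I_n}) u w : u \notin P -> w \in gcomp P u -> w \notin P.
Proof. by move=> uP; rewrite inE; apply: connect_eP_notin. Qed.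

Lemma comp_self (P : {set 'I_n}) u : u \in gcomp P u.
Proof. by rewrite inE connect0. Qed.

Lemma comp_meet (P : {set 'I_n}) u u' w : w \in gcomp P u -> w \in gcomp P u' -> connect (eP P) u u'.
Proof.
rewrite !inE => c1 c2. apply: connect_trans c1 _.
by rewrite (sym_connect_sym (@eP_sym P)).
Qed.

End Graph.

Local Open Scope ring_scope.

Lemma sum_if1 (R : realType) (I : finType) (P Q : pred I) :
  \sum_(i | P i) (if Q i then 1 else 0 : R) = #|[set i | P i && Q i]|%:R.
Proof.
rewrite -big_mkcondr (eq_bigl (fun i => i \in [set i | P i && Q i])); last first.
  by move=> i; rewrite inE.
by rewrite sumr_const.
Qed.

Section Fail.
Variable R : realType.
Variable n : nat.
Variable e : rel 'I_n.
Hypothesis esym : symmetric e.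
Hypothesis eirr : irreflexive e.
Variable P : {set 'I_n}.

Definition dP (i : 'I_n) : nat := #|[set k | e i k && (k \notin P)]|.

Definition Amat : 'M[R]_n := \matrix_(i, j)
  (if i == j then - ((if i \in P then 0%N else dP i)%:R) else (if e i j then 1 else 0)).

Definition ind (C : {set 'I_n}) : 'cV[R]_n := \col_i (if i \in C then 1 else 0).

Definition closedC (C : {set 'I_n}) := forall w k, w \in C -> e w k -> k \notin P -> k \in C.
Definition avoidP (C : {set 'I_n}) := forall w, w \in C -> w \notin P.

Lemma Amat_sym : Amat^T = Amat.
Proof.
apply/matrixP => i j; rewrite !mxE eq_sym esym.
by case: eqP => // ->.
Qed.

Lemma Amat_SG : in_SG e Amat.
Proof.
split; first exact: Amat_sym.
move=> i j ij; rewrite mxE (negbTE ij).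
by case: (e i j); rewrite ?eqxx ?oner_eq0.
Qed.

Lemma A_ind C i : closedC C -> avoidP C ->
  (Amat *m ind C) i 0 = if i \in P then #|[set k | (k \in C) && e i k]|%:R else 0.
Proof.
move=> Ccl Cav.
rewrite mxE (eq_bigr (fun j => if j \in C then Amat i j else 0)); last first.
  by move=> j _; rewrite /ind [X in _ * X]mxE; case: (j \in C); rewrite ?mulr1 ?mulr0.
rewrite -big_mkcond /=.
case: (boolP (i \in P)) => iP.
  rewrite (eq_bigr (fun j => if e i j then 1 else 0)); first by rewrite sum_if1.
  move=> j jC; rewrite mxE; case: eqP => // ij.
  by move: (Cav _ jC); rewrite -ij iP.
case: (boolP (i \in C)) => iC.
  rewrite (bigD1 i) //= mxE eqxx (negbTE iP).
  rewrite (eq_bigr (fun j => if e i j then 1 else 0)); last first.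
    by move=> j /andP[_ ji]; rewrite mxE eq_sym (negbTE ji).
  rewrite sum_if1.
  suff -> : [set i0 | (i0 \in C) && (i0 != i) && e i i0] = [set k | e i k && (k \notin P)].
    by rewrite addNr.
  apply/setP => k; rewrite !inE.
  apply/idP/idP.
    by case/andP => /andP[kC _] eik; rewrite eik (Cav _ kC).
  case/andP => eik kP; rewrite eik (Ccl _ _ iC eik kP) andbT /=.
  by apply: contraTneq eik => ->; rewrite eirr.
apply: big1 => j jC; rewrite mxE; case: eqP => [ij|_].
  by move: iC; rewrite ij jC.
case: (boolP (e i j)) => // eij.
by move: iC; rewrite (Ccl _ _ jC _ iP) // esym.
Qed.


Lemma ind0 (C : {set 'I_n}) i : i \notin C -> ind C i 0 = 0.
Proof. by move=> iC; rewrite mxE (negbTE iC). Qed.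
Lemma ind1 (C : {set 'I_n}) i : i \in C -> ind C i 0 = 1.
Proof. by move=> iC; rewrite mxE iC. Qed.

Lemma fail_SSP (C1 C2 D1 D2 : {set 'I_n}) c1 d1 :
  closedC C1 -> closedC C2 -> closedC D1 -> closedC D2 ->
  avoidP C1 -> avoidP C2 -> avoidP D1 -> avoidP D2 ->
  (forall w, w \in C1 -> w \in C2 -> False) ->
  (forall w, w \in D1 -> w \in D2 -> False) ->
  (forall w, (w \in C1) || (w \in C2) -> (w \in D1) || (w \in D2) -> False) ->
  (forall p, p \in P -> #|[set k | (k \in C1) && e p k]| = #|[set k | (k \in C2) && e p k]|) ->
  (forall p, p \in P -> #|[set k | (k \in D1) && e p k]| = #|[set k | (k \in D2) && e p k]|) ->
  c1 \in C1 -> d1 \in D1 -> ~ SSP Amat.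
Proof.
move=> cC1 cC2 cD1 cD2 aC1 aC2 aD1 aD2 dC dD dCD bC bD c1C d1D.
have subE (M N : 'cV[R]_n) i : (M - N) i 0 = M i 0 - N i 0 by rewrite !mxE.
pose x := ind C1 - ind C2; pose y := ind D1 - ind D2.
have Ax : Amat *m x = 0.
  apply/matrixP => i j; rewrite (ord1 j) mulmxBr subE !A_ind // mxE.
  case: ifP => iP; last by rewrite subrr. by rewrite (bC _ iP) subrr.
have Ay : Amat *m y = 0.
  apply/matrixP => i j; rewrite (ord1 j) mulmxBr subE !A_ind // mxE.
  case: ifP => iP; last by rewrite subrr. by rewrite (bD _ iP) subrr.
have x0 i : (i \in C1) || (i \in C2) = false -> x i 0 = 0.
  move/negbT; rewrite negb_or => /andP[i1 i2].
  by rewrite subE ind0 // ind0 // subrr.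
have y0 i : (i \in D1) || (i \in D2) = false -> y i 0 = 0.
  move/negbT; rewrite negb_or => /andP[i1 i2].
  by rewrite subE ind0 // ind0 // subrr.
pose X := x *m y^T + y *m x^T.
have XE i j : X i j = x i 0 * y j 0 + y i 0 * x j 0.
  by rewrite !mxE !big_ord1 !mxE.
have Xd i : X i i = 0.
  rewrite XE; case: (boolP ((i \in C1) || (i \in C2))) => iC.
    have iD : (i \in D1) || (i \in D2) = false by apply/negP => iD; exact: (dCD i).
    by rewrite y0 // mulr0 mul0r addr0.
  by rewrite x0 ?mul0r ?mulr0 ?add0r //; apply/negbTE.
have Xe i j : e i j -> X i j = 0.
  move=> eij; rewrite XE.
  have H1 u v : e u v -> x u 0 * y v 0 = 0.
    move=> euv.
    case: (boolP ((u \in C1) || (u \in C2))) => uC; last by rewrite x0 ?mul0r //; apply/negbTE.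
    case: (boolP ((v \in D1) || (v \in D2))) => vD; last by rewrite y0 ?mulr0 //; apply/negbTE.
    exfalso; apply: (dCD v) (vD).
    have vP : v \notin P by case/orP: vD => vD; [exact: aD1|exact: aD2].
    by case/orP: uC => uC; [rewrite (cC1 _ _ uC euv vP)|rewrite (cC2 _ _ uC euv vP) orbT].
  have H2 u v : e u v -> y u 0 * x v 0 = 0.
    by move=> euv; rewrite mulrC; apply: H1; rewrite esym.
  by rewrite H1 // H2 // addr0.
move=> H.
have : X = 0.
  apply: H.
  - by rewrite /X linearD /= !trmx_mul !trmxK addrC.
  - apply/matrixP => i j; rewrite [LHS]mxE [RHS]mxE.
    case: (eqVneq i j) => [->|ij]; first by rewrite Xd mulr0.
    case: (boolP (e i j)) => eij; first by rewrite Xe // mulr0.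
    by rewrite mxE (negbTE ij) (negbTE eij) mul0r.
  - apply/matrixP => i j; rewrite [LHS]mxE [RHS]mxE.
    case: (eqVneq i j) => [->|ij]; first by rewrite Xd mulr0.
    by rewrite mxE (negbTE ij) mul0r.
  - rewrite /X mulmxDr mulmxDl !mulmxA Ax Ay !mul0mx add0r.
    have tx : x^T *m Amat = 0 by rewrite -[Amat]Amat_sym -trmx_mul Ax trmx0.
    have ty : y^T *m Amat = 0 by rewrite -[Amat]Amat_sym -trmx_mul Ay trmx0.
    by rewrite -!mulmxA tx ty !mulmx0 addr0 subrr.
move/matrixP => /(_ c1 d1); rewrite XE.
have -> : x c1 0 = 1.
  rewrite subE ind1 // ind0 ?subr0 //.
  by apply/negP => c2; exact: (dC c1).
have -> : y d1 0 = 1.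
  rewrite subE ind1 // ind0 ?subr0 //.
  by apply/negP => d2; exact: (dD d1).
have -> : y c1 0 = 0.
  apply: y0; apply/negP => cD; apply: (dCD c1) cD; by rewrite c1C.
by rewrite mul1r mul0r addr0 mxE => /eqP; rewrite oner_eq0.
Qed.

End Fail.

Local Close Scope ring_scope.
Section OnlyIf.
Variable R : realType.
Variable n : nat.
Variable e : rel 'I_n.
Hypothesis esym : symmetric e.
Hypothesis eirr : irreflexive e.
Hypothesis eacy : graph_acyclic e.

Lemma bal1 (P : {set 'I_n}) p u : p \in P -> e p u -> u \notin P ->
  [set k | (k \in gcomp e P u) && e p k] = [set u].
Proof.
move=> pP epu uP; apply/setP => k; rewrite !inE.
apply/idP/idP; last by move/eqP->; rewrite connect0 epu.
case/andP => kc epk; apply/negPn/negP => ku.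
apply: (L_gen esym eacy pP epu epk _ uP); first by rewrite eq_sym.
exact: kc.
Qed.

Lemma bal0 (P : {set 'I_n}) p u : (forall k, k \in gcomp e P u -> e p k -> False) ->
  [set k | (k \in gcomp e P u) && e p k] = set0.
Proof.
move=> H; apply/setP => k; rewrite !inE; apply/negP => /andP[kc epk]; apply: (H k) epk; by rewrite inE.
Qed.

Lemma disj_comp (P : {set 'I_n}) p u u' w : p \in P -> e p u -> e p u' -> u != u' -> u \notin P ->
  w \in gcomp e P u -> w \in gcomp e P u' -> False.
Proof.
move=> pP epu epu' uu' uP w1 w2.
exact: (L_gen esym eacy pP epu epu' uu' uP (comp_meet esym w1 w2)).
Qed.

Lemma neigh_notin (P : {set 'I_n}) p u : p \in P -> e p u -> u \notin P -> True.
Proof. by []. Qed.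

Lemma deg4_fail v : (4 <= degree e v)%N -> ~ in_GSSP R e.
Proof.
move=> /card_geqP [s [us ss sub]].
case: s us ss sub => [|u1 [|u2 [|u3 [|u4 []]]]] //= us _ sub.
have ev u : u \in [:: u1; u2; u3; u4] -> e v u by move/sub; rewrite inE.
have e1 := ev u1 (mem_head _ _).
have e2 : e v u2 by apply: ev; rewrite !inE eqxx ?orbT.
have e3 : e v u3 by apply: ev; rewrite !inE eqxx ?orbT.
have e4 : e v u4 by apply: ev; rewrite !inE eqxx ?orbT.
move: us; rewrite !inE !negb_or => /and4P[/and3P[n12 n13 n14] /andP[n23 n24] n34 _].
set P := [set v].
have vP : v \in P by rewrite inE.
have nP u : e v u -> u \notin P by move=> evu; rewrite inE; apply: contraTneq evu => ->; rewrite eirr.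
move=> H; apply: (@fail_SSP R n e esym eirr P (gcomp e P u1) (gcomp e P u2) (gcomp e P u3) (gcomp e P u4) u1 u3).
- by move=> w k; apply: comp_closed; apply: nP.
- by move=> w k; apply: comp_closed; apply: nP.
- by move=> w k; apply: comp_closed; apply: nP.
- by move=> w k; apply: comp_closed; apply: nP.
- by move=> w; apply: comp_notin; apply: nP.
- by move=> w; apply: comp_notin; apply: nP.
- by move=> w; apply: comp_notin; apply: nP.
- by move=> w; apply: comp_notin; apply: nP.
- by move=> w; apply: (disj_comp vP e1 e2 n12 (nP _ e1)).
- by move=> w; apply: (disj_comp vP e3 e4 n34 (nP _ e3)).
- move=> w /orP[] w1 /orP[] w2.
  + exact: (disj_comp vP e1 e3 n13 (nP _ e1) w1 w2).
  + exact: (disj_comp vP e1 e4 n14 (nP _ e1) w1 w2).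
  + exact: (disj_comp vP e2 e3 n23 (nP _ e2) w1 w2).
  + exact: (disj_comp vP e2 e4 n24 (nP _ e2) w1 w2).
- move=> p; rewrite inE => /eqP ->.
  by rewrite (bal1 vP e1 (nP _ e1)) (bal1 vP e2 (nP _ e2)) !cards1.
- move=> p; rewrite inE => /eqP ->.
  by rewrite (bal1 vP e3 (nP _ e3)) (bal1 vP e4 (nP _ e4)) !cards1.
- exact: comp_self.
- exact: comp_self.
- by apply: H; apply: Amat_SG.
Qed.


Lemma good_pair a b : (3 <= degree e a)%N ->
  exists a1 a2, [/\ a1 != a2, e a a1, e a a2, ~~ connect (eP e [set a]) a1 b
                  & ~~ connect (eP e [set a]) a2 b].
Proof.
move=> /card_geqP [s [us ss sub]].
case: s us ss sub => [|u1 [|u2 [|u3 []]]] //= us _ sub.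
have ev u : u \in [:: u1; u2; u3] -> e a u by move/sub; rewrite inE.
have e1 := ev u1 (mem_head _ _).
have e2 : e a u2 by apply: ev; rewrite !inE eqxx ?orbT.
have e3 : e a u3 by apply: ev; rewrite !inE eqxx ?orbT.
move: us; rewrite !inE !negb_or => /and3P[/andP[n12 n13] n23 _].
have aP : a \in [set a] by rewrite inE.
have nP u : e a u -> u \notin [set a].
  by move=> eau; rewrite inE; apply: contraTneq eau => ->; rewrite eirr.
have two u u' : u != u' -> e a u -> e a u' -> connect (eP e [set a]) u b ->
    connect (eP e [set a]) u' b -> False.
  move=> uu' eu eu' c1 c2; apply: (L_gen esym eacy aP eu eu' uu' (nP _ eu)).
  apply: connect_trans c1 _; by rewrite (sym_connect_sym (eP_sym esym _)).
case: (boolP (connect (eP e [set a]) u1 b)) => b1.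
  exists u2, u3; split => //; apply/negP => c.
    by apply: (two u1 u2 n12 e1 e2).
  by apply: (two u1 u3 n13 e1 e3).
case: (boolP (connect (eP e [set a]) u2 b)) => b2.
  exists u1, u3; split => //; apply/negP => c.
  by apply: (two u2 u3 n23 e2 e3).
by exists u1, u2.
Qed.

Lemma side a b x : a != b -> e a x -> ~~ connect (eP e [set a]) x b ->
 [/\ x \notin [set a; b],
     forall k, k \in gcomp e [set a; b] x -> e b k -> False &
     forall y w, e b y -> y \notin [set a; b] -> w \in gcomp e [set a; b] x ->
        w \in gcomp e [set a; b] y -> False].
Proof.
move=> ab eax nc.
have sub : forall u w, connect (eP e [set a; b]) u w -> connect (eP e [set a]) u w.
  apply: connect_sub => u w /and3P[euw uP wP]; apply: connect1.
  by rewrite /eP /= euw !inE; move: uP wP; rewrite !inE !negb_or => /andP[-> _] /andP[-> _].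
have xP : x \notin [set a; b].
  rewrite !inE negb_or; apply/andP; split.
    by apply: contraTneq eax => ->; rewrite eirr.
  by apply: contraNneq nc => ->; rewrite connect0.
split => //.
  move=> k kc ebk; move/negP: nc; apply.
  have kP := comp_notin xP kc.
  have kc' : connect (eP e [set a; b]) x k by move: kc; rewrite inE.
  apply: connect_trans (sub _ _ kc') (connect1 _).
  rewrite /eP /= esym ebk !inE; move: kP; rewrite !inE !negb_or => /andP[-> _].
  by rewrite eq_sym ab.
move=> y w eby yP w1 w2; move/negP: nc; apply.
apply: connect_trans (sub _ _ (comp_meet esym w1 w2)) (connect1 _).
rewrite /eP /= esym eby !inE; move: yP; rewrite !inE !negb_or => /andP[-> _].
by rewrite eq_sym ab.
Qed.

Lemma two3_fail a b : a != b -> degree e a = 3 -> degree e b = 3 -> ~ in_GSSP R e.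
Proof.
move=> ab da db.
have [a1 [a2 [a12 ea1 ea2 g1 g2]]] := good_pair (a:=a) b (eq_leq (Logic.eq_sym da)).
have [b1 [b2 [b12 eb1 eb2 h1 h2]]] := good_pair (a:=b) a (eq_leq (Logic.eq_sym db)).
have ba : b != a by rewrite eq_sym.
have [A1P A1b A1d] := side ab ea1 g1.
have [A2P A2b A2d] := side ab ea2 g2.
have [B1P B1a B1d] := side ba eb1 h1.
have [B2P B2a B2d] := side ba eb2 h2.
have Eab : [set b; a] = [set a; b] by rewrite setUC.
rewrite Eab in B1P B1a B1d B2P B2a B2d.
set P := [set a; b] in A1P A1b A1d A2P A2b A2d B1P B1a B1d B2P B2a B2d *.
have aP : a \in P by rewrite !inE eqxx.
have bP : b \in P by rewrite !inE eqxx orbT.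
move=> H; apply: (@fail_SSP R n e esym eirr P (gcomp e P a1) (gcomp e P a2) (gcomp e P b1) (gcomp e P b2) a1 b1).
- by move=> w k; apply: comp_closed.
- by move=> w k; apply: comp_closed.
- by move=> w k; apply: comp_closed.
- by move=> w k; apply: comp_closed.
- by move=> w; apply: comp_notin.
- by move=> w; apply: comp_notin.
- by move=> w; apply: comp_notin.
- by move=> w; apply: comp_notin.
- by move=> w; apply: (disj_comp aP ea1 ea2 a12 A1P).
- by move=> w; apply: (disj_comp bP eb1 eb2 b12 B1P).
- move=> w /orP[] w1 /orP[] w2.
  + exact: (A1d b1 w eb1 B1P w1 w2).
  + exact: (A1d b2 w eb2 B2P w1 w2).
  + exact: (A2d b1 w eb1 B1P w1 w2).
  + exact: (A2d b2 w eb2 B2P w1 w2).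
- move=> p; rewrite !inE => /orP[] /eqP ->.
    by rewrite (bal1 aP ea1 A1P) (bal1 aP ea2 A2P) !cards1.
  by rewrite (bal0 A1b) (bal0 A2b) !cards0.
- move=> p; rewrite !inE => /orP[] /eqP ->.
    by rewrite (bal0 B1a) (bal0 B2a) !cards0.
  by rewrite (bal1 bP eb1 B1P) (bal1 bP eb2 B2P) !cards1.
- exact: comp_self.
- exact: comp_self.
- by apply: H; apply: Amat_SG.
Qed.

End OnlyIf.

Section Tree.
Variable n : nat.
Variable e : rel 'I_n.
Hypothesis esym : symmetric e.
Hypothesis eirr : irreflexive e.
Hypothesis eacy : graph_acyclic e.
Hypothesis econn : graph_connected e.
Variable c : 'I_n.
Hypothesis degc : (degree e c <= 3)%N.
Hypothesis deg2 : forall v, v != c -> (degree e v <= 2)%N.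

Fixpoint ball k : {set 'I_n} :=
  if k is k'.+1 then ball k' :|: [set y | [exists x in ball k', e x y]] else [set c].

Lemma ball_path s x k : x \in ball k -> path e x s -> last x s \in ball (k + size s).
Proof.
elim: s x k => [|y s IH] x k /=; first by rewrite addn0.
move=> xk /andP[exy ps]; rewrite addnS -addSn; apply: IH ps.
rewrite /= !inE; apply/orP; right; apply/existsP; exists x; by rewrite xk.
Qed.

Lemma ball_ex v : exists k, v \in ball k.
Proof.
have /connectP [s ps ->] := econn c v.
by exists (0 + size s); apply: ball_path ps; rewrite /= inE.
Qed.

Lemma ball_mono k k' : (k <= k')%N -> {subset ball k <= ball k'}.
Proof.
move=> /subnK <-; elim: (k' - k)%N => // m IH x /IH xb.
by rewrite addSn /= inE xb.
Qed.

Definition h v := ex_minn (ball_ex v).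

Lemma h_ball v : v \in ball (h v).
Proof. by rewrite /h; case: ex_minnP. Qed.

Lemma h_min v k : v \in ball k -> (h v <= k)%N.
Proof. by rewrite /h; case: ex_minnP => m _ H /H. Qed.

Lemma h_c : h c = 0.
Proof. by apply/eqP; rewrite -leqn0; apply: h_min; rewrite /= inE. Qed.

Lemma h0 v : h v = 0 -> v = c.
Proof. by move=> hv; have := h_ball v; rewrite hv /= inE => /eqP. Qed.

Lemma hn0 v : v != c -> (0 < h v)%N.
Proof. by move=> vc; rewrite lt0n; apply: contra vc => /eqP/h0 ->. Qed.

Lemma h_edge x y : e x y -> (h y <= (h x).+1)%N.
Proof.
move=> exy; apply: h_min => /=; rewrite inE; apply/orP; right.
by rewrite inE; apply/existsP; exists x; rewrite h_ball.
Qed.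

Lemma h_par_ex v : v != c -> exists x, e x v && ((h x).+1 == h v).
Proof.
move=> vc; have hv := hn0 vc; have vb := h_ball v.
move: vb; case E: (h v) hv => [|k] // _ /=; rewrite inE => /orP[vk|].
  by have := h_min vk; rewrite E ltnn.
rewrite inE => /existsP [x /andP[xk exv]]; exists x; rewrite exv /=.
have := h_min xk; have := h_edge exv; rewrite E => H1 H2.
by apply/eqP; lia.
Qed.

Definition par v := odflt v [pick x | e x v && ((h x).+1 == h v)].

Lemma par_spec v : v != c -> e (par v) v /\ (h (par v)).+1 = h v.
Proof.
move=> vc; rewrite /par; case: pickP => [x /andP[exv /eqP hx]|H] //=.
by have [x] := h_par_ex vc; rewrite H.
Qed.

Lemma par_e v : v != c -> e v (par v).
Proof. by move=> vc; rewrite esym; case: (par_spec vc). Qed.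

Lemma h_par v : v != c -> h (par v) = (h v).-1.
Proof. by move=> vc; case: (par_spec vc) => _ <-. Qed.

Lemma conn_avoid p v : p != c -> (h v <= h p)%N -> v != p -> connect (eP e [set p]) v c.
Proof.
move=> pc; elim/ltn_ind: (h v) {-2}v (erefl (h v)) => k IH {}v hv hvp vp.
case: (eqVneq v c) => [->|vc]; first exact: connect0.
have [epv hpv] := par_spec vc.
have pvp : par v != p by apply/eqP => E; rewrite E in hpv; lia.
apply: connect_trans (connect1 _) (IH _ _ (par v) erefl _ pvp).
- by rewrite /eP /= esym epv !inE vp pvp.
- lia.
- lia.
Qed.

Lemma edge_par_aux x y : e x y -> (h x <= h y)%N -> y != c /\ x = par y.
Proof.
move=> exy hxy.
have yc : y != c.
  apply/negP => /eqP yc; move: hxy; rewrite yc h_c leqn0 => /eqP/h0 xc.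
  by move: exy; rewrite xc yc eirr.
split => //; apply/eqP/negPn/negP => xpy.
have [epy hpy] := par_spec yc.
have yP : y \in [set y] by rewrite inE.
have pyy : par y \notin [set y] by rewrite inE; apply/eqP => E; rewrite E in hpy; lia.
apply: (L_gen esym eacy yP (par_e yc) (_ : e y x) _ pyy); first by rewrite esym.
  by rewrite eq_sym.
apply: connect_trans (conn_avoid yc _ _) _.
- lia.
- by apply: contraNneq pyy => ->; rewrite inE.
rewrite (sym_connect_sym (eP_sym esym _)); apply: conn_avoid => //.
by apply: contraTneq exy => ->; rewrite eirr.
Qed.


Lemma edge_par x y : e x y -> (y != c /\ x = par y) \/ (x != c /\ y = par x).
Proof.
move=> exy; case: (leqP (h x) (h y)) => H.
  by left; apply: edge_par_aux.
by right; apply: edge_par_aux; [rewrite esym | apply: ltnW].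
Qed.

Lemma child_uniq v k1 k2 : v != c -> par k1 = v -> k1 != c -> par k2 = v -> k2 != c -> k1 = k2.
Proof.
move=> vc p1 c1 p2 c2; apply/eqP/negPn/negP => k12.
have := deg2 vc; rewrite leqNgt => /negP; apply; apply/card_gt2P.
have h1 := h_par c1; have h2 := h_par c2; rewrite p1 in h1; rewrite p2 in h2.
have hv := hn0 vc; have hpv := h_par vc.
exists (par v), k1, k2; split; split.
- by rewrite inE par_e.
- by rewrite inE -p1; case: (par_spec c1).
- by rewrite inE -p2; case: (par_spec c2).
- by apply/eqP => E; rewrite E in hpv; lia.
- exact: k12.
- by apply/eqP => E; rewrite E in h2; lia.
Qed.

Lemma c_child k : e c k -> k != c /\ par k = c.
Proof.
move/edge_par => [[kc <-] //|[cc _]]; by rewrite eqxx in cc.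
Qed.

Lemma c_children r s t k : e c r -> e c s -> e c t -> e c k ->
  r != s -> s != t -> r != t -> [|| k == r, k == s | k == t].
Proof.
move=> er es et ek rs st rt; apply/negPn/negP; rewrite !negb_or => /and3P[kr ks kt].
have := degc; rewrite leqNgt => /negP; apply; apply/card_geqP.
exists [:: r; s; t; k]; split => //.
  by rewrite /= !inE !negb_or rs rt st /= !(eq_sym _ k) kr ks kt.
by move=> x; rewrite !inE => /or4P[] /eqP ->.
Qed.

Definition anc k v := iter k par v.

Lemma h_anc k v : (k <= h v)%N -> h (anc k v) = (h v - k)%N.
Proof.
elim: k => [|k IH] hk; first by rewrite subn0.
rewrite /anc iterS -/(anc k v).
have ac : anc k v != c by apply/eqP => E; have := IH (ltnW hk); rewrite E h_c; lia.
rewrite h_par // IH; [lia | exact: ltnW].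
Qed.

Lemma anc_par k v : anc k (par v) = anc k.+1 v.
Proof. by rewrite /anc iterSr. Qed.

Lemma anc_hc v : anc (h v) v = c.
Proof. by apply: h0; rewrite h_anc // subnn. Qed.

Lemma anc_nc k v : (k < h v)%N -> anc k v != c.
Proof. by move=> hk; apply/eqP => E; have := h_anc (ltnW hk); rewrite E h_c; lia. Qed.

Definition leg v := anc (h v).-1 v.

Lemma h_leg v : v != c -> h (leg v) = 1.
Proof. by move=> vc; have := hn0 vc; rewrite /leg h_anc; lia. Qed.

Lemma leg_nc v : v != c -> leg v != c.
Proof. by move=> vc; apply/eqP => E; have := h_leg vc; rewrite E h_c. Qed.

Lemma par_leg v : v != c -> par (leg v) = c.
Proof.
move=> vc; apply: h0; rewrite h_par ?leg_nc // h_leg //.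
Qed.

Lemma leg_anc k v : (k < h v)%N -> leg (anc k v) = leg v.
Proof.
move=> hk; rewrite /leg h_anc ?(ltnW hk) // /anc -iterD; congr iter; lia.
Qed.

Lemma leg_par v : (2 <= h v)%N -> leg (par v) = leg v.
Proof. by move=> hv; rewrite -[par v]/(anc 1 v) leg_anc. Qed.

Lemma leg_h1 v : h v = 1 -> leg v = v.
Proof. by move=> hv; rewrite /leg hv. Qed.

Lemma leg_inj x y : x != c -> y != c -> leg x = leg y -> h x = h y -> x = y.
Proof.
elim: (h x) {-2}x y (erefl (h x)) => [|m IH] {}x y hx xc yc lxy hxy.
  by have := hn0 xc; rewrite hx.
case: m IH hx => [|m] IH hx.
  by rewrite -(leg_h1 hx) lxy leg_h1 // -hxy.
have px : par x != c by apply/eqP => E; have := h_par xc; rewrite E h_c hx.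
have py : par y != c by apply/eqP => E; have := h_par yc; rewrite E h_c -hxy hx.
have E : par x = par y.
  apply: IH => //.
  - by rewrite h_par // hx.
  - by rewrite !leg_par ?hx -?hxy ?hx.
  - by rewrite !h_par // hxy.
exact: (child_uniq px erefl xc (Logic.eq_sym E) yc).
Qed.

Lemma same_leg x y : x != c -> y != c -> leg x = leg y -> (h x <= h y)%N ->
  x = anc (h y - h x) y.
Proof.
move=> xc yc lxy hxy; have hx := hn0 xc.
apply: leg_inj => //.
- by apply: anc_nc; lia.
- by rewrite leg_anc // ; lia.
- by rewrite h_anc; lia.
Qed.

Lemma h_lt v : (h v < n)%N.
Proof.
have inj : injective (fun k : 'I_(h v).+1 => anc k v).
  move=> k1 k2 E; apply/val_inj.
  have l1 : (k1 <= h v)%N by rewrite -ltnS ltn_ord.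
  have l2 : (k2 <= h v)%N by rewrite -ltnS ltn_ord.
  have := congr1 h E; rewrite /= !h_anc //; lia.
by have := leq_card _ inj; rewrite !card_ord.
Qed.

Local Open Scope ring_scope.
Variable R : realType.
Variables A X : 'M[R]_n.
Hypothesis HA : in_SG e A.
Hypothesis HXs : X^T = X.
Hypothesis HAX : hadamard A X = 0.
Hypothesis HIX : hadamard 1%:M X = 0.
Hypothesis Hcomm : A *m X - X *m A = 0.


Lemma Asym i j : A i j = A j i.
Proof. by case: HA => /matrixP /(_ j i); rewrite mxE. Qed.

Lemma A0 i j : i != j -> ~~ e i j -> A i j = 0.
Proof. by case: HA => _ H ij; rewrite -(H _ _ ij) => /negPn/eqP. Qed.

Lemma Anz i j : e i j -> A i j != 0.
Proof.
move=> eij; case: HA => _ ->; first exact: eij.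
by apply: contraTneq eij => ->; rewrite eirr.
Qed.

Lemma Xsym i j : X i j = X j i.
Proof. by move/matrixP: HXs => /(_ j i); rewrite mxE. Qed.

Lemma Xdiag i : X i i = 0.
Proof. by move/matrixP: HIX => /(_ i i); rewrite !mxE eqxx mul1r. Qed.

Lemma Xedge i j : e i j -> X i j = 0.
Proof.
move=> eij; move/matrixP: HAX => /(_ i j); rewrite !mxE => /eqP.
by rewrite mulf_eq0 (negbTE (Anz eij)) => /eqP.
Qed.

Lemma comm u w : \sum_k A u k * X k w = \sum_k X u k * A k w.
Proof.
by move/matrixP: Hcomm => /(_ u w); rewrite !mxE => /eqP; rewrite subr_eq0 => /eqP.
Qed.

Lemma sum_single (F : 'I_n -> R) i0 : (forall k, k != i0 -> F k = 0) -> \sum_k F k = F i0.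
Proof. by move=> H; rewrite (bigD1 i0) //= big1 ?addr0. Qed.

Lemma aligned D j : (D <= h j)%N -> X (anc D j) j = 0.
Proof.
elim/ltn_ind: D j => D IH j.
case: D IH => [|[|D]] IH hj.
- exact: Xdiag.
- have jc : j != c by apply/eqP => E; move: hj; rewrite E h_c.
  by apply: Xedge; rewrite /anc /= esym par_e.
suff H : forall t j, (n - h j <= t)%N -> (D.+2 <= h j)%N -> X (anc D.+2 j) j = 0.
  exact: (H _ j (leqnn _) hj).
clear j hj; elim => [|t IHt] j ht hj2.
  by have := h_lt j; lia.
set i := anc D.+2 j; set u := anc D.+1 j; set w := anc D j.
have pu : par u = i by rewrite /i /anc iterS.
have pw : par w = u by rewrite /u /anc iterS.
have uc : u != c by apply: anc_nc; lia.
have wc : w != c by apply: anc_nc; lia.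
have := comm u j.
rewrite (sum_single (i0 := i)); last first.
  move=> k ki; case: (eqVneq k u) => [->|ku].
    by rewrite (IH D.+1) ?mulr0 //; lia.
  case: (boolP (e u k)) => euk; last by rewrite A0 ?mul0r // eq_sym.
  case: (edge_par euk) => [[kc uk]|[_ ki']]; last by rewrite -pu ki' eqxx in ki.
  have -> : k = w by apply: (child_uniq uc (Logic.eq_sym uk) kc pw wc).
  by rewrite (IH D) ?mulr0 //; lia.
rewrite big1; last first.
  move=> k _; case: (eqVneq k j) => [->|kj].
    by rewrite (IH D.+1) ?mul0r //; lia.
  case: (boolP (e k j)) => ekj; last by rewrite A0 ?mulr0.
  case: (edge_par ekj) => [[jc kp]|[kc jp]].
    have -> : u = anc D (par j) by rewrite anc_par.
    rewrite kp (IH D) ?mul0r //; rewrite h_par //; lia.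
  have -> : u = anc D.+2 k by rewrite -anc_par -jp.
  rewrite IHt ?mul0r //.
    have := h_par kc; rewrite -jp; have := h_lt k; lia.
  have := h_par kc; rewrite -jp; lia.
move/eqP; rewrite mulf_eq0 (negbTE (Anz _)) /= ?pu; first by move/eqP.
by rewrite -pu par_e.
Qed.


Lemma sum_single_P (P : pred 'I_n) (F : 'I_n -> R) i0 : P i0 ->
  (forall k, P k -> k != i0 -> F k = 0) -> \sum_(k | P k) F k = F i0.
Proof. by move=> Pi H; rewrite (bigD1 i0) //= big1 ?addr0 // => k /andP[]; apply: H. Qed.

Lemma sum_two (P : pred 'I_n) (F : 'I_n -> R) a b : a != b -> P a -> P b ->
  (forall k, P k -> k != a -> k != b -> F k = 0) -> \sum_(k | P k) F k = F a + F b.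
Proof.
move=> ab Pa Pb H; rewrite (bigD1 a) //= (bigD1 b) /=; last by rewrite Pb eq_sym.
rewrite big1 ?addr0 // => k /andP[/andP[Pk ka] kb]; exact: H.
Qed.

Lemma Xc j : X c j = 0.
Proof. by rewrite -(anc_hc j); apply: aligned. Qed.

Lemma Xc' j : X j c = 0.
Proof. by rewrite Xsym Xc. Qed.

Definition alpha v := \prod_(k < (h v).-1) A (anc k v) (anc k.+1 v).

Lemma alpha1 v : (h v <= 1)%N -> alpha v = 1.
Proof. move=> hv; rewrite /alpha; have -> : (h v).-1 = 0%N by lia. by rewrite big_ord0. Qed.

Lemma alpha_par v : (2 <= h v)%N -> alpha v = A v (par v) * alpha (par v).
Proof.
move=> hv; have vc : v != c by apply/eqP => E; move: hv; rewrite E h_c.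
rewrite /alpha; have -> : (h v).-1 = ((h (par v)).-1).+1 by rewrite h_par //; lia.
rewrite big_ord_recl /=; congr (_ * _); apply: eq_bigr => i _.
by rewrite /= !anc_par.
Qed.

Lemma alpha_nz v : alpha v != 0.
Proof.
elim/ltn_ind: (h v) {-2}v (erefl (h v)) => k IH {}v hv.
case: (leqP (h v) 1) => hv1; first by rewrite alpha1 ?oner_eq0.
have vc : v != c by apply/eqP => E; move: hv1; rewrite E h_c.
rewrite alpha_par // mulf_neq0 //; first by apply: Anz; apply: par_e.
apply: (IH (h (par v))) => //; rewrite h_par //; lia.
Qed.

Definition Psi x y := X x y * alpha x * alpha y.
Definition Tm D r s := \sum_(y | (leg y == s) && (h y == D.-1)) X r y * alpha y.

Definition crossP D x y := [/\ x != c, y != c, leg x != leg y & (h x + h y)%N = D].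

Lemma cross D x y : crossP D x y -> X x y = 0.
Proof.
elim/ltn_ind: D x y => D IH x y [xc yc lxy hD].
have hx := hn0 xc; have hy := hn0 yc.
have D2 : (2 <= D)%N by clear -hx hy hD; lia.
have S1 x' y' : crossP D x' y' -> (2 <= h x')%N ->
    Psi x' y' = \sum_(k | (par k == y') && (k != c)) Psi (par x') k.
  move=> [x'c y'c l' hD'] hx2.
  set u := par x'.
  have uc : u != c by apply/eqP => E; have := h_par x'c; rewrite -/u E h_c; clear -hx2; lia.
  have hu : h u = (h x').-1 by rewrite h_par.
  have lu : leg u = leg x' by rewrite leg_par.
  have hy' := hn0 y'c.
  have Xuy : X u y' = 0 by apply: (IH (h u + h y')%N); [clear -hu hD' hx2; lia| split => //; rewrite lu].
  have := comm u y'.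
  rewrite (sum_single (i0 := x')); last first.
    move=> k kx; case: (eqVneq k u) => [->|ku]; first by rewrite Xuy mulr0.
    case: (boolP (e u k)) => euk; last by rewrite A0 ?mul0r // eq_sym.
    case: (edge_par euk) => [[kc uk]|[_ kpu]].
      by rewrite (child_uniq uc (Logic.eq_sym uk) kc erefl x'c) eqxx in kx.
    case: (eqVneq (par u) c) => [puc|puc]; first by rewrite kpu puc Xc mulr0.
    have hpu := h_par uc.
    have hu2 : (2 <= h u)%N by have := hn0 puc; clear -hpu; lia.
    rewrite kpu (IH (h (par u) + h y')%N) ?mulr0 //; first by clear -hpu hu hD' hu2 hx2; lia.
    by split => //; rewrite leg_par // lu.
  rewrite (bigID (fun k => (par k == y') && (k != c))) /=.
  rewrite [X in _ + X]big1 ?addr0; last first.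
    move=> k kP; case: (eqVneq k y') => [->|ky]; first by rewrite Xuy mul0r.
    case: (boolP (e k y')) => eky; last by rewrite A0 ?mulr0.
    case: (edge_par eky) => [[_ kpy]|[kc ykp]]; last by rewrite ykp eqxx kc in kP.
    case: (eqVneq (par y') c) => [pyc|pyc]; first by rewrite kpy pyc Xc' mul0r.
    have hpy := h_par y'c.
    have hy2 : (2 <= h y')%N by have := hn0 pyc; clear -hpy; lia.
    rewrite kpy (IH (h u + h (par y'))%N) ?mul0r //; first by clear -hpy hy2 hD' hu hx2; lia.
    by split => //; rewrite leg_par // lu.
  move=> E; rewrite /Psi alpha_par // -/u.
  have -> : X x' y' * (A x' u * alpha u) * alpha y' = (A u x' * X x' y') * (alpha u * alpha y').
    by rewrite (Asym x'); ring.
  rewrite E big_distrl /=; apply: eq_bigr => k /andP[/eqP pk kc].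
  rewrite (alpha_par (v := k)); last by have := h_par kc; rewrite pk; clear -hy'; lia.
  rewrite pk; ring.
have S2 p x' y' : h x' = p.+1 -> crossP D x' y' -> Psi x' y' = Tm D (leg x') (leg y').
  elim: p x' y' => [|p IHp] x' y' hx' [x'c y'c l' hD'].
    rewrite /Psi (alpha1 (v := x')) ?hx' // mulr1 (leg_h1 hx') /Tm.
    rewrite (sum_single_P (i0 := y')) //; first by rewrite eqxx /=; apply/eqP; clear -hx' hD'; lia.
    move=> k /andP[/eqP lk /eqP hk] ky; exfalso; move/eqP: ky; apply.
    have kc : k != c by apply/eqP => E; move: hk; rewrite E h_c; clear -D2; lia.
    by apply: leg_inj => //; clear -hk hD' hx'; lia.
  rewrite S1 //; last by rewrite hx'.
  have pxc : par x' != c by apply/eqP => E; have := h_par x'c; rewrite E h_c hx'.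
  have hpx : h (par x') = p.+1 by rewrite h_par // hx'.
  have lpx : leg (par x') = leg x' by rewrite leg_par // hx'.
  case: (pickP (fun k => (par k == y') && (k != c))) => [k0 /andP[/eqP pk0 k0c]|none].
    have E0 : \sum_(k | (par k == y') && (k != c)) Psi (par x') k = Psi (par x') k0.
      apply: sum_single_P; first by rewrite pk0 eqxx.
      move=> k /andP[/eqP pk kc] kk0; exfalso; move/eqP: kk0; apply.
      exact: (child_uniq y'c pk kc pk0 k0c).
    rewrite E0.
    have hk0 : h k0 = (h y').+1 by have := h_par k0c; rewrite pk0; have := hn0 k0c; clear -k0c; lia.
    have lk0 : leg k0 = leg y' by rewrite -pk0 leg_par // hk0; have := hn0 y'c; clear -y'c; lia.
    rewrite IHp // -?lpx -?lk0 //; split => //; first by rewrite lpx lk0.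
    by rewrite hpx hk0; clear -hx' hD'; lia.
  rewrite big1; last by move=> k kP; rewrite none in kP.
  symmetry; rewrite /Tm big1 // => y2 /andP[/eqP ly2 /eqP hy2].
  exfalso.
  have hy' := hn0 y'c.
  have y2c : y2 != c by apply/eqP => E; move: hy2; rewrite E h_c; clear -D2; lia.
  set m := (h y2 - h y' - 1)%N.
  have hm : (m < h y2)%N by rewrite /m; clear -hy2 hD' hx' hy'; lia.
  have := none (anc m y2); rewrite anc_nc // andbT.
  have -> : par (anc m y2) = anc (h y2 - h y') y2.
    change (par (anc m y2)) with (anc m.+1 y2).
    by have -> : m.+1 = (h y2 - h y')%N by rewrite /m; clear -hy2 hD' hx' hy'; lia.
  rewrite -same_leg //; first by rewrite eqxx.
  clear -hy2 hD' hx' hy'; lia.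
have child r : e c r -> [/\ r != c, par r = c, h r = 1 & leg r = r].
  move=> ecr; have [rc pr] := c_child ecr.
  have hr : h r = 1 by have := h_par rc; rewrite pr h_c; have := hn0 rc; clear -rc; lia.
  by split => //; rewrite leg_h1.
have Texist r s' y' : e c r -> e c s' -> r != s' -> leg y' = s' -> h y' = D.-1 ->
    Tm D r s' = Tm D s' r.
  move=> ecr ecs rs ly hyy.
  have [rc pr hr lr] := child r ecr; have [sc ps hs ls] := child s' ecs.
  have y'c : y' != c by apply/eqP => E; move: hyy; rewrite E h_c; clear -D2; lia.
  have E1 := S2 0%N r y' hr.
  have E2 := S2 (D.-2) y' r.
  rewrite lr ly in E1; rewrite lr ly in E2.
  rewrite -E1; first rewrite -E2.
  - by rewrite /Psi Xsym; ring.
  - by rewrite hyy; clear -D2; lia.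
  - by split => //; [rewrite ly lr eq_sym | rewrite hyy hr; clear -D2; lia].
  - by split => //; [rewrite ly lr | rewrite hyy hr; clear -D2; lia].
have Tsym r s' : e c r -> e c s' -> r != s' -> Tm D r s' = Tm D s' r.
  move=> ecr ecs rs.
  case: (pickP (fun y => (leg y == s') && (h y == D.-1))) => [y' /andP[/eqP ly /eqP hyy]|n1].
    exact: (Texist r s' y').
  case: (pickP (fun y => (leg y == r) && (h y == D.-1))) => [y' /andP[/eqP ly /eqP hyy]|n2].
    by symmetry; apply: (Texist s' r y') => //; rewrite eq_sym.
  by rewrite /Tm !big1 // => k; rewrite ?n1 ?n2.
have Tc s' : Tm D c s' = 0 by rewrite /Tm big1 // => y' _; rewrite Xc mul0r.
have S4 s' : e c s' -> \sum_(k | k != s') A c k * Tm D k s' = 0.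
  move=> ecs; have [sc ps hs ls] := child s' ecs.
  rewrite /Tm; under eq_bigr do rewrite big_distrr /=.
  rewrite exchange_big /= big1 // => y' /andP[/eqP ly /eqP hyy].
  have y'c : y' != c by apply/eqP => E; move: hyy; rewrite E h_c; clear -D2; lia.
  have := comm c y'; rewrite [RHS]big1; last by move=> k _; rewrite Xc mul0r.
  rewrite (bigD1 s') //= .
  have -> : X s' y' = 0 by rewrite -ly; apply: aligned; rewrite leq_pred.
  rewrite mulr0 add0r => E.
  transitivity ((\sum_(k | k != s') A c k * X k y') * alpha y'); last by rewrite E mul0r.
  by rewrite big_distrl; apply: eq_bigr => k _ /=; ring.
have Acnz k : e c k -> A c k != 0 by apply: Anz.
have Zc k s0 : k != c -> ~~ e c k -> A c k * Tm D k s0 = 0.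
  by move=> kc nek; rewrite A0 ?mul0r // eq_sym.
have S5 r s' : e c r -> e c s' -> r != s' -> Tm D r s' = 0.
  move=> ecr ecs rs.
  case: (pickP (fun t => [&& e c t, t != r & t != s'])) => [t /and3P[ect tr ts]|none].
    have st : s' != t by rewrite eq_sym.
    have rt : r != t by rewrite eq_sym.
    have only3 k : e c k -> [|| k == r, k == s' | k == t].
      by move=> eck; exact: (c_children ecr ecs ect eck rs st rt).
    have Z k s0 : k != r -> k != s' -> k != t -> A c k * Tm D k s0 = 0.
      move=> kr ks kt; case: (eqVneq k c) => [->|kc]; first by rewrite Tc mulr0.
      apply: Zc => //; apply/negP => /only3; by rewrite (negbTE kr) (negbTE ks) (negbTE kt).
    have Es : A c r * Tm D r s' + A c t * Tm D t s' = 0.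
      rewrite -(S4 s' ecs) (sum_two (a := r) (b := t)) // ?(eq_sym r t) //.
      by move=> k ks kr kt; apply: Z.
    have Er : A c s' * Tm D s' r + A c t * Tm D t r = 0.
      rewrite -(S4 r ecr) (sum_two (a := s') (b := t)) // ?(eq_sym s' t) ?(eq_sym s' r) //.
      by move=> k kr ks kt; apply: Z.
    have Et : A c r * Tm D r t + A c s' * Tm D s' t = 0.
      rewrite -(S4 t ect) (sum_two (a := r) (b := s')) // ?(eq_sym r t) ?(eq_sym s' t) //.
      by move=> k kt kr ks; apply: Z.
    rewrite (Tsym s' r) // 1?eq_sym // in Er.
    rewrite (Tsym r t) // 1?eq_sym // (Tsym s' t) // 1?eq_sym // in Et.
    have : 2 * A c r * A c s' * Tm D r s' = 0.
      have -> : 2 * A c r * A c s' * Tm D r s' =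
        A c s' * (A c r * Tm D r s' + A c t * Tm D t s') +
        A c r * (A c s' * Tm D r s' + A c t * Tm D t r) -
        A c t * (A c r * Tm D t r + A c s' * Tm D t s') by ring.
      by rewrite Es Er Et; ring.
    move/eqP; rewrite !mulf_eq0 pnatr_eq0 /= (negbTE (Acnz _ ecr)) (negbTE (Acnz _ ecs)) /=.
    by move/eqP.
  have : A c r * Tm D r s' = 0.
    rewrite -(S4 s' ecs) (sum_single_P (i0 := r)) //.
    move=> k ks kr; case: (eqVneq k c) => [->|kc]; first by rewrite Tc mulr0.
    apply: Zc => //; apply/negP => eck.
    by have := none k; rewrite eck kr ks.
  by move/eqP; rewrite mulf_eq0 (negbTE (Acnz _ ecr)) /= => /eqP.
have hx1 : h x = ((h x).-1).+1 by clear -hx; lia.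
have E := S2 _ x y hx1 (And4 xc yc lxy hD).
have ecl v : v != c -> e c (leg v).
  by move=> vc; rewrite esym -[X in e _ X](par_leg vc) par_e // leg_nc.
rewrite S5 ?ecl // in E.
by move/eqP: E; rewrite /Psi !mulf_eq0 !(negbTE (alpha_nz _)) !orbF => /eqP.
Qed.

Lemma X_zero i j : X i j = 0.
Proof.
case: (eqVneq i c) => [->|ic]; first exact: Xc.
case: (eqVneq j c) => [->|jc]; first exact: Xc'.
case: (eqVneq (leg i) (leg j)) => lij; last first.
  by apply: (cross (D := (h i + h j)%N)); split.
case: (leqP (h i) (h j)) => hij.
  by rewrite (same_leg ic jc lij hij); apply: aligned; apply: leq_subr.
rewrite Xsym (same_leg jc ic (Logic.eq_sym lij) (ltnW hij)); apply: aligned; apply: leq_subr.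
Qed.

End Tree.



Theorem theorem4p3 (R : realType) (n : nat) (e : rel 'I_n) :
  is_tree e ->
  (in_GSSP R e <->
   ((forall v : 'I_n, (degree e v < 4)%N) /\
    ~ (exists u v : 'I_n, u != v /\ degree e u = 3%N /\ degree e v = 3%N))).
Proof.
move=> [[esym eirr] [econn eacy]]; split.
  move=> H; split.
    move=> v; rewrite ltnNge; apply/negP => d4.
    exact: (deg4_fail esym eirr eacy d4 H).
  move=> [u [v [uv [du dv]]]].
  exact: (two3_fail esym eirr eacy uv du dv H).
move=> [d4 no33] A HA X HXs HAX HIX Hc.
apply/matrixP => i j; rewrite mxE.
pose c := odflt i [pick v | degree e v == 3%N].
have degc : (degree e c <= 3)%N by rewrite -ltnS d4.
have deg2 : forall v, v != c -> (degree e v <= 2)%N.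
  move=> v vc; have := d4 v; rewrite ltnS leq_eqVlt => /orP[/eqP dv|] //.
  exfalso; move: vc; rewrite /c; case: pickP => [c' /eqP dc'|none] /=.
    by move=> vc'; apply: no33; exists v, c'; split.
  by have := none v; rewrite dv eqxx.
exact: (X_zero esym eirr eacy econn degc deg2 HA HXs HAX HIX Hc).
Qed.
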